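(* Consider the $1$-center problem in $\mathbb{R}^1$ where object $i$ has its own maximum speed $v_i>0$. Let $v_M=\max_i v_i$ and $v_m=\min_i v_i$. There is an absolute constant $C$ such that on every instance $I$ with $n$ objects, the measure of the Round-robin strategy is at most $C\,\frac{v_M n}{v_m}\cdot \mathrm{OPT}(I)$.
   Context: Setting. There are $n\ge 2$ objects in $\mathbb{R}^d$; object $i$ follows a trajectory $p_i:[0,\infty)\to\mathbb{R}^d$ with $|p_i(t)-p_i(s)|\le v_i|t-s|$ for all $s,t$, where $v_i>0$ is a known speed bound for object $i$. The initial positions $p_i(0)$ are known. A query strategy queries one object at each time $t=1,2,3,\dots$; querying object $i$ at time $t$ reveals $p_i(t)$. For $t\ge 0$ let $\tau_i(t)$ be the last time $\le t$ at which object $i$ was queried (or $0$ if never). The uncertainty region of object $i$ at time $t$ is the closed ball $U_i(t)$ of radius $v_i(t-\tau_i(t))$ centered at $p_i(\tau_i(t))$. For a center function $f$ mapping an $n$-tuple of points to a point, the uncertainty region of the center at time $t$ is $\{f(q_1,\dots,q_n): q_i\in U_i(t)\}$. The size of a set is its diameter. The measure of a strategy on an instance is the supremum over $t\in\{1,2,\dots\}$ of the size of the center's uncertainty region at time $t$ (just after the query at time $t$). The optimal measure $\mathrm{OPT}(I)$ of an instance $I$ is the infimum of the measure over all query sequences, which may be chosen with full knowledge of the trajectories. The Round-robin strategy queries objects $1,2,\dots,n,1,2,\dots,n,\dots$ in a fixed cyclic order. Here $d=1$ and the center function is the $1$-center: for $x_1,\dots,x_n\in\mathbb{R}$ it is $(\max_i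 x_i+\min_i x_i)/2$. *)

(* Defs.v *)
From HB Require Import structures.
From mathcomp Require Import all_boot all_order all_algebra.
From mathcomp Require Import all_classical all_reals.
From mathcomp Require Import ereal Rstruct.
Set Implicit Arguments. Unset Strict Implicit. Unset Printing Implicit Defensive.
Import Order.TTheory GRing.Theory Num.Theory.
Local Open Scope classical_set_scope.
Local Open Scope ring_scope.

Notation RR := Rdefinitions.R.

(* A query strategy: sigma t is the (index < n of the) object queried at time t >= 1
   (the value at t = 0 is irrelevant). *)

Fixpoint last_query (sigma : nat -> nat) (i : nat) (t : nat) : nat :=
  match t with
  | 0 => 0
  | t'.+1 => if sigma t'.+1 == i then t'.+1 else last_query sigma i t'
  end.

Definition unc_region (n : nat) (p : 'I_n -> RR -> RR) (v : 'I_n -> RR)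
  (sigma : nat -> nat) (i : 'I_n) (t : nat) : set RR :=
  let s := last_query sigma i t in
  [set x | `|x - p i s%:R| <= v i * (t - s)%:R].

Definition center1 (n : nat) (x : 'I_n -> RR) : RR :=
  (sup (range x) + inf (range x)) / 2.

Definition center_region (n : nat) (p : 'I_n -> RR -> RR) (v : 'I_n -> RR)
  (sigma : nat -> nat) (t : nat) : set RR :=
  [set center1 q | q in [set q : 'I_n -> RR | forall i, unc_region p v sigma i t (q i)]].

Definition diam (S : set RR) : \bar RR :=
  ereal_sup [set (`|a - b|)%:E | a in S & b in S].

Definition measure_of (n : nat) (p : 'I_n -> RR -> RR) (v : 'I_n -> RR)
  (sigma : nat -> nat) : \bar RR :=
  ereal_sup [set diam (center_region p v sigma t) | t in [set t : nat | (0 < t)%N]].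

Definition valid_strategy (n : nat) (sigma : nat -> nat) : Prop :=
  forall t, (1 <= t)%N -> (sigma t < n)%N.

Definition OPT (n : nat) (p : 'I_n -> RR -> RR) (v : 'I_n -> RR) : \bar RR :=
  ereal_inf [set measure_of p v sigma | sigma in [set s | valid_strategy n s]].

Definition round_robin (n : nat) : nat -> nat := fun t => (t.-1 %% n)%N.

Definition vmax (n : nat) (v : 'I_n -> RR) : RR := sup (range v).
Definition vmin (n : nat) (v : 'I_n -> RR) : RR := inf (range v).

(* Main.v *)
Require Import Defs.
From HB Require Import structures.
From mathcomp Require Import all_boot all_order all_algebra.
From mathcomp Require Import all_classical all_reals.
From mathcomp Require Import ereal Rstruct.
From mathcomp Require Import lra zify.
Import Order.TTheory GRing.Theory Num.Theory.
Local Open Scope classical_set_scope.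
Local Open Scope ring_scope.
Set Implicit Arguments. Unset Strict Implicit.

Lemma sup_att (E : set RR) x : E x -> ubound E x -> sup E = x.
Proof.
move=> Ex ub; apply/le_anti/andP; split.
  by apply: ge_sup => //; exists x.
by apply: sup_upper_bound => //; split; exists x.
Qed.

Lemma inf_att (E : set RR) x : E x -> lbound E x -> inf E = x.
Proof.
move=> Ex lb; rewrite /inf (@sup_att _ (- x)) ?opprK //.
  by exists x.
by move=> _ [y Ey <-]; rewrite lerN2; apply: lb.
Qed.

Lemma range_max n (i0 : 'I_n) (q : 'I_n -> RR) :
  exists a, sup (range q) = q a /\ forall j, q j <= q a.
Proof.
case: (@arg_maxP _ RR _ i0 xpredT q isT) => a _ Ha.
exists a; split; last by move=> j; apply: Ha.
apply: sup_att; first by exists a.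
by move=> _ [j _ <-]; apply: Ha.
Qed.

Lemma range_min n (i0 : 'I_n) (q : 'I_n -> RR) :
  exists a, inf (range q) = q a /\ forall j, q a <= q j.
Proof.
case: (@arg_minP _ RR _ i0 xpredT q isT) => a _ Ha.
exists a; split; last by move=> j; apply: Ha.
apply: inf_att; first by exists a.
by move=> _ [j _ <-]; apply: Ha.
Qed.

Lemma center_up n (i0 : 'I_n) (q q' : 'I_n -> RR) D :
  (forall i, `|q i - q' i| <= D) -> `|center1 q - center1 q'| <= D.
Proof.
move=> H.
have [a [Sa Ha]] := range_max i0 q.
have [a' [Sa' Ha']] := range_max i0 q'.
have [b [Ib Hb]] := range_min i0 q.
have [b' [Ib' Hb']] := range_min i0 q'.
rewrite /center1 Sa Sa' Ib Ib'.
have := H a; have := H a'; have := H b; have := H b'.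
rewrite !ler_norml => /andP[h1 h2] /andP[h3 h4] /andP[h5 h6] /andP[h7 h8].
have := Ha a'; have := Ha' a; have := Hb b'; have := Hb' b.
move=> *; apply/andP; split; lra.
Qed.

Lemma center_low n (j1 j2 : 'I_n) (q q' : 'I_n -> RR) (k : nat) m :
  j1 != j2 ->
  (forall i, q' i <= q i) -> (forall i, (val i != k) -> q' i + 2 * m <= q i) ->
  m <= center1 q - center1 q'.
Proof.
move=> j12 H1 H2.
have [a [Sa Ha]] := range_max j1 q.
have [a' [Sa' Ha']] := range_max j1 q'.
have [b [Ib Hb]] := range_min j1 q.
have [b' [Ib' Hb']] := range_min j1 q'.
rewrite /center1 Sa Sa' Ib Ib'.
case: (eqVneq (val a') k) => [ea'|na'].
  case: (eqVneq (val b) k) => [eb|nb].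
    have eab : a' = b by apply: val_inj; rewrite ea' eb.
    subst a'.
    have [j nj] : exists j : 'I_n, val j != k.
      case: (eqVneq (val j1) k) => e1; last by exists j1.
      exists j2; apply/negP => /eqP e2; move/negP: j12; apply; apply/eqP.
      by apply: val_inj; rewrite e1 e2.
    have := H2 j nj; have := Ha j; have := Hb' j; have := H1 b.
    move=> *; lra.
  have := H2 b nb; have := Hb' b; have := Ha a'; have := H1 a'.
  move=> *; lra.
have := H2 a' na'; have := Ha a'; have := Hb' b; have := H1 b.
move=> *; lra.
Qed.

Lemma lq_le sigma i t : (last_query sigma i t <= t)%N.
Proof. elim: t => //= t IH; case: ifP => // _; exact: leqW. Qed.

Lemma lq_ge sigma i t t' : (1 <= t')%N -> (t' <= t)%N -> sigma t' = i ->
  (t' <= last_query sigma i t)%N.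
Proof.
move=> H1; elim: t => [|t IH] Ht' Hs /=; first by lia.
case: ifP => // /eqP ne.
apply: IH => //.
rewrite leq_eqVlt in Ht'; case/orP: Ht' => [/eqP e|] //.
by subst t'; case: ne.
Qed.

Lemma rr_bound n (i : 'I_n) t : (t <= last_query (round_robin n) i t + n)%N.
Proof.
case: (leqP t n) => [h|h]; first by apply: leq_trans h (leq_addl _ _).
have hi := ltn_ord i.
have e := divn_eq t.-1 n.
set q := (t.-1 %/ n)%N in e; set r := (t.-1 %% n)%N in e.
have hr : (r < n)%N by rewrite ltn_mod; lia.
case: (leqP (nat_of_ord i) r) => hir.
  have : (q * n + i + 1 <= last_query (round_robin n) i t)%N.
    apply: lq_ge; [lia | lia |].
    rewrite /round_robin addn1 /=.
    idtac.
    rewrite -modnDm modnMl add0n modn_mod modn_small //.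
  lia.
have q0 : (0 < q)%N.
  rewrite lt0n; apply/negP => /eqP q0; rewrite q0 mul0n add0n in e; lia.
have : ((q.-1) * n + i + 1 <= last_query (round_robin n) i t)%N.
  apply: lq_ge; [lia | |].
    have : (q.-1 * n + n = q * n)%N by rewrite addnC -mulSn prednK.
    lia.
  rewrite /round_robin addn1 /=.
  idtac.
  rewrite -modnDm modnMl add0n modn_mod modn_small //.
have : (q.-1 * n + n = q * n)%N by rewrite addnC -mulSn prednK.
lia.
Qed.

Theorem proposition2 :
  exists C : RR,
  forall (n : nat) (v : 'I_n -> RR) (p : 'I_n -> RR -> RR),
    (2 <= n)%N ->
    (forall i, 0 < v i) ->
    (forall i (s t : RR), 0 <= s -> 0 <= t -> `|p i t - p i s| <= v i * `|t - s|) ->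
    (measure_of p v (round_robin n) <=
       ((C * vmax v * n%:R / vmin v)%:E * OPT p v)%E)%E.
Proof.
exists 2 => n v p Hn Hv _.
pose j0 := @Ordinal n 0 (leq_trans (isT : (0 < 2)%N) Hn).
pose j1 := @Ordinal n 1 Hn.
have j01 : j0 != j1 by [].
have [a [Sa Ha]] := range_max j0 v.
have [b [Ib Hb]] := range_min j0 v.
have vMe : vmax v = v a by [].
have vme : vmin v = v b by [].
have vm0 : 0 < vmin v by rewrite vme.
have up : (measure_of p v (round_robin n) <= (2 * vmax v * n%:R)%:E)%E.
  apply: ge_ereal_sup => _ [t Ht <-].
  apply: ge_ereal_sup => _ [x [qa Hqa <-] [y [qb Hqb <-] <-]].
  rewrite lee_fin; apply: (center_up j0) => i.
  have := Hqa i; have := Hqb i; rewrite /unc_region /=.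
  set s := last_query _ _ _.
  have hw : v i * (t - s)%:R <= vmax v * n%:R.
    apply: ler_pM; [exact: ltW | exact: ler0n | by rewrite vMe | ].
    rewrite ler_nat leq_subLR; exact: rr_bound.
  rewrite !ler_norml => /andP[h1 h2] /andP[h3 h4].
  apply/andP; split; lra.
have low : ((vmin v)%:E <= OPT p v)%E.
  apply: le_ereal_inf_tmp => _ [sigma _ <-].
  apply: le_ereal_sup_tmp; exists (diam (center_region p v sigma 1)).
    by exists 1%N.
  pose d (i : 'I_n) := v i * (1 - last_query sigma i 1)%:R.
  have d0 : forall i, 0 <= d i by move=> i; apply: mulr_ge0; [exact: ltW | exact: ler0n].
  pose X i := p i (last_query sigma i 1)%:R + d i.
  pose X' i := p i (last_query sigma i 1)%:R - d i.
  apply: le_ereal_sup_tmp; exists (`|center1 X - center1 X'|)%:E.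
    exists (center1 X); first by exists X => // i; rewrite /unc_region /= /X addrAC subrr add0r ger0_norm.
    exists (center1 X'); first by exists X' => // i; rewrite /unc_region /= /X' addrAC subrr add0r normrN ger0_norm.
    by [].
  rewrite lee_fin; apply: le_trans (ler_norm _).
  apply: (center_low (k := sigma 1%N) j01).
    by move=> i; rewrite /X /X'; have := d0 i; lra.
  move=> i ni; rewrite /X /X' /d /=.
  have -> : (sigma 1%N == i) = false by apply/negbTE; rewrite eq_sym.
  rewrite subn0 mulr1; have := Hb i; rewrite -vme; lra.
apply: (le_trans up).
have -> : (2 * vmax v * n%:R)%:E = ((2 * vmax v * n%:R / vmin v)%:E * (vmin v)%:E)%E.
  by rewrite -EFinM divfK // gt_eqF.
apply: lee_pmul => //.
  rewrite lee_fin; apply: divr_ge0; last exact: ltW.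
  apply: mulr_ge0; last exact: ler0n.
  by apply: mulr_ge0 => //; rewrite vMe; exact: ltW.
by rewrite lee_fin; exact: ltW.
Qed.
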